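(* Let $\theta\in\mathcal X:=\prod_{s\in\mathcal S}\Delta(\mathcal A)$ and $\pi_\theta(a|s)=\theta_{s,a}$, and assume $d^{\pi_\theta,\hat P^{\pi_\theta}}(s)>0$ for all $s$. Define $G(\theta)\in\mathbb R^{\mathcal S\times\mathcal A}$ by $[G(\theta)]_{s,a}=\frac{1}{1-\gamma}d^{\pi_\theta,\hat P^{\pi_\theta}}(s)Q^{\pi_\theta}(s,a)$. Then $$\mathbb E_{s_0\sim\rho}\big(V^\star(s_0)-V^{\pi_\theta}(s_0)\big)\le\Big\|\frac{d^{\pi^\star,\hat P^{\pi_\theta}}}{d^{\pi_\theta,\hat P^{\pi_\theta}}}\Big\|_\infty\max_{\bar\pi\in\mathcal X}\langle\bar\pi-\pi_\theta,G(\theta)\rangle,$$ where $\big\|\frac{d^{\pi^\star,\hat P^{\pi_\theta}}}{d^{\pi_\theta,\hat P^{\pi_\theta}}}\big\|_\infty:=\max_s\frac{d^{\pi^\star,\hat P^{\pi_\theta}}(s)}{d^{\pi_\theta,\hat P^{\pi_\theta}}(s)}$ and $\pi^\star(s)\in\arg\max_a(r(s,a)-\gamma\sigma(P_{s,a},V^\star))$ (viewed as a deterministic policy).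
   Context: $\mathcal S$ and $\mathcal A$ are finite sets; $\Delta(\mathcal X)$ denotes the probability simplex over a finite set $\mathcal X$. $P=\{P_{s,a}\}$ with $P_{s,a}\in\Delta(\mathcal S)$ is the nominal transition kernel, $r:\mathcal S\times\mathcal A\to[0,1]$, $\gamma\in[0,1)$, $\rho\in\Delta(\mathcal S)$. A stationary policy is a map $\pi:\mathcal S\to\Delta(\mathcal A)$. A function $\sigma:\mathbb R^{\mathcal S}\to\mathbb R$ is a convex risk measure if (i) $V'\le V$ pointwise implies $\sigma(V)\le\sigma(V')$; (ii) $\sigma(V+m)=\sigma(V)-m$ for every constant $m$; (iii) $\sigma$ is convex. For each $(s,a)$ a convex risk measure $\sigma(P_{s,a},\cdot)$ is given, with penalty $D(\hat\mu,P_{s,a}):=\sup_{V}\big(-\sigma(P_{s,a},V)-\mathbb E_{s'\sim\hat\mu}V(s')\big)$. For a policy $\pi$, $V^\pi$ is the unique solution of $V^\pi(s)=\sum_a\pi(a|s)(r(s,a)-\gamma\sigma(P_{s,a},V^\pi))$, $Q^\pi(s,a):=r(s,a)-\gamma\sigma(P_{s,a},V^\pi)$; $V^\star$ is the unique solution of $V^\star(s)=\max_a(r(s,a)-\gamma\sigma(P_{s,a},V^\star))$. $\hat P^\pi_{s,a}\in\arg\min_{\hat\mu\in\Delta(\mathcal S)}\big(D(\hat\mu,P_{s,a})+\mathbb E_{s'\sim\hat\mu}V^\pi(s')\big)$. For a policy $\pi$ and stationary kernel $K$, $d^{\pi,K}(s):=(1-\gamma)\sum_{t\ge0}\gamma^t\Pr(s_t=s)$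 with $s_0\sim\rho$, $a_t\sim\pi(\cdot|s_t)$, $s_{t+1}\sim K_{s_t,a_t}$. The inner product is $\langle x,y\rangle=\sum_{s,a}x_{s,a}y_{s,a}$. *)

(* Defs.v *)
From HB Require Import structures.
From mathcomp Require Import all_boot all_order all_algebra.
From mathcomp Require Import all_classical all_reals all_analysis.
Set Implicit Arguments. Unset Strict Implicit. Unset Printing Implicit Defensive.
Import Order.TTheory GRing.Theory Num.Theory.
Local Open Scope ring_scope.
Local Open Scope classical_set_scope.

Section RMDP.
Variables (R : realType) (S A : finType).

Definition is_dist (T : finType) (mu : T -> R) : Prop :=
  (forall x, 0 <= mu x) /\ \sum_(x : T) mu x = 1.

Definition is_policy (pi : S -> A -> R) : Prop := forall s, is_dist (pi s).

Definition convex_risk_measure (sig : (S -> R) -> R) : Prop :=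
  [/\ (forall V V' : S -> R, (forall s, V' s <= V s) -> sig V <= sig V'),
      (forall (V : S -> R) (m : R), sig (fun s => V s + m) = sig V - m)
    & (forall (V V' : S -> R) (l : R), 0 <= l <= 1 ->
         sig (fun s => l * V s + (1 - l) * V' s) <= l * sig V + (1 - l) * sig V')].

Definition expect (mu : S -> R) (V : S -> R) : R := \sum_(s : S) mu s * V s.

Definition penalty (sig : (S -> R) -> R) (mu : S -> R) : \bar R :=
  ereal_sup [set ((- sig V - expect mu V)%:E) | V in [set: S -> R]].

Definition is_robust_value (sigma : S -> A -> (S -> R) -> R) (r : S -> A -> R)
  (gamma : R) (pi : S -> A -> R) (V : S -> R) : Prop :=
  forall s, V s = \sum_(a : A) pi s a * (r s a - gamma * sigma s a V).

Definition is_robust_optimal_value (sigma : S -> A -> (S -> R) -> R)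
  (r : S -> A -> R) (gamma : R) (V : S -> R) : Prop :=
  forall s, exists2 a, (forall a', r s a' - gamma * sigma s a' V <= r s a - gamma * sigma s a V)
    & V s = r s a - gamma * sigma s a V.

Definition is_worst_kernel (sigma : S -> A -> (S -> R) -> R) (V : S -> R)
  (Phat : S -> A -> S -> R) : Prop :=
  forall s a, is_dist (Phat s a) /\
    forall mu, is_dist mu ->
      (penalty (sigma s a) (Phat s a) + (expect (Phat s a) V)%:E
        <= penalty (sigma s a) mu + (expect mu V)%:E)%E.

Fixpoint state_dist (rho : S -> R) (pi : S -> A -> R) (K : S -> A -> S -> R)
  (t : nat) : S -> R :=
  match t with
  | 0%N => rho
  | t'.+1 => fun s' => \sum_(s : S) state_dist rho pi K t' s *
                        \sum_(a : A) pi s a * K s a s'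
  end.

Definition occupancy (gamma : R) (rho : S -> R) (pi : S -> A -> R)
  (K : S -> A -> S -> R) (s : S) : R :=
  (1 - gamma) * limn (fun n => \sum_(0 <= t < n) gamma ^+ t * state_dist rho pi K t s).

Definition det_policy (f : S -> A) : S -> A -> R :=
  fun s a => if a == f s then 1 else 0.

Definition inner (x y : S -> A -> R) : R := \sum_(s : S) \sum_(a : A) x s a * y s a.

End RMDP.

(* Main.v *)
Require Import Defs.
From HB Require Import structures.
From mathcomp Require Import all_boot all_order all_algebra.
From mathcomp Require Import all_classical all_reals all_analysis.
Import Order.TTheory GRing.Theory Num.Theory.
Local Open Scope ring_scope.
Local Open Scope classical_set_scope.
From mathcomp Require Import ring lra.
Import numFieldNormedType.Exports.

Section Subgrad.
Variables (R : realType) (S : finType) (f : (S -> R) -> R) (x : S -> R).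
Hypothesis fconv : forall (V V' : S -> R) (l : R), 0 <= l <= 1 ->
  f (fun s => l * V s + (1 - l) * V' s) <= l * f V + (1 - l) * f V'.

Definition supp (l : seq S) (h : S -> R) := forall s, s \notin l -> h s = 0.
Definition lin (g h : S -> R) := \sum_s g s * h s.
Definition shift (h : S -> R) := fun s => x s + h s.

Lemma key_ineq (l : seq S) (g : S -> R) (e : S)
  (IH : forall h, supp l h -> f x + lin g h <= f (shift h))
  (h1 h2 : S -> R) (t1 t2 : R) : supp l h1 -> supp l h2 -> 0 < t1 -> 0 < t2 ->
  (f x + lin g h2 - f (shift (fun s => h2 s + (- t2) * (s == e)%:R))) / t2 <=
  (f (shift (fun s => h1 s + t1 * (s == e)%:R)) - f x - lin g h1) / t1.
Proof.
move=> s1 s2 t1p t2p.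
set F1 := f (shift (fun s => h1 s + t1 * _)).
set F2 := f (shift (fun s => h2 s + - t2 * _)).
have tp : 0 < t1 + t2 by rewrite addr_gt0.
have tn : t1 + t2 != 0 by rewrite gt_eqF.
pose u := fun s => (t2 * h1 s + t1 * h2 s) / (t1 + t2).
have su : supp l u by move=> s sl; rewrite /u s1 // s2 // !mulr0 addr0 mul0r.
have Hu := IH u su.
pose lam := t2 / (t1 + t2).
have l01 : 0 <= lam <= 1.
  apply/andP; split; first by apply: divr_ge0; apply: ltW.
  by rewrite /lam ler_pdivrMr // mul1r lerDr ltW.
have Hc := fconv (shift (fun s => h1 s + t1 * (s == e)%:R))
                 (shift (fun s => h2 s + (- t2) * (s == e)%:R)) lam l01.
have eqf : (fun s => lam * shift (fun s => h1 s + t1 * (s == e)%:R) s +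
   (1 - lam) * shift (fun s => h2 s + (- t2) * (s == e)%:R) s) = shift u.
  apply/funext => s; rewrite /shift /u /lam; field => //.
rewrite eqf -/F1 -/F2 in Hc.
have linu : lin g u = (t2 * lin g h1 + t1 * lin g h2) / (t1 + t2).
  rewrite /lin /u !mulr_sumr -big_split /= mulr_suml; apply: eq_bigr => s _.
  field => //.
rewrite linu in Hu.
have H := le_trans Hu Hc.
rewrite -(ler_pM2l tp) in H.
have E1 : (t1 + t2) * (f x + (t2 * lin g h1 + t1 * lin g h2) / (t1 + t2)) =
   (t1 + t2) * f x + t2 * lin g h1 + t1 * lin g h2 by field.
have E2 : (t1 + t2) * (lam * F1 + (1 - lam) * F2) = t2 * F1 + t1 * F2
  by rewrite /lam; field.
rewrite E1 E2 in H.
rewrite ler_pdivrMr // mulrAC ler_pdivlMr //.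
nra.
Qed.

Lemma subgrad_seq (l : seq S) : exists g : S -> R,
  forall h, supp l h -> f x + lin g h <= f (shift h).
Proof.
elim: l => [|e l [g IH]].
  exists (fun _ => 0) => h hs.
  have -> : shift h = x by apply/funext => s; rewrite /shift hs ?addr0.
  by rewrite /lin big1 ?addr0 // => s _; rewrite mul0r.
have [el|nel] := boolP (e \in l).
  exists g => h hs; apply: IH => s sl; apply: hs; rewrite inE negb_or sl andbT.
  by apply/eqP => se; move: sl; rewrite se el.
pose L := [set y : R | exists h t, [/\ supp l h, 0 < t &
   y = (f x + lin g h - f (shift (fun s => h s + (- t) * (s == e)%:R))) / t]].
have h0s : supp l (fun _ => 0) by [].
have hsL : has_sup L.
  split; first by exists ((f x + lin g (fun _ => 0) -
          f (shift (fun s => 0 + (- 1) * (s == e)%:R))) / 1), (fun _ => 0), 1.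
  exists ((f (shift (fun s => 0 + 1 * (s == e)%:R)) - f x - lin g (fun _ => 0)) / 1).
  move=> y [h [t [hs tp ->]]]; exact: (key_ineq l g e IH (fun _ => 0) h 1 t h0s hs ltr01 tp).
set c := sup L.
have cup : forall h t, supp l h -> 0 < t ->
   (f x + lin g h - f (shift (fun s => h s + (- t) * (s == e)%:R))) / t <= c.
  by move=> h t hs tp; apply: (sup_upper_bound hsL); exists h, t.
have clo : forall h t, supp l h -> 0 < t ->
   c <= (f (shift (fun s => h s + t * (s == e)%:R)) - f x - lin g h) / t.
  move=> h t hs tp; apply: ge_sup; first by case: hsL.
  by move=> y [h2 [t2 [h2s t2p ->]]]; exact: (key_ineq l g e IH h h2 t t2 hs h2s tp t2p).
exists (fun s => if s == e then c else g s) => h hs.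
pose h0 := fun s => if s == e then 0 else h s.
have h0s' : supp l h0.
  move=> s sl; rewrite /h0; case: eqP => // /eqP se; apply: hs.
  by rewrite inE negb_or se.
have lin' : lin (fun s => if s == e then c else g s) h = lin g h0 + c * h e.
  rewrite /lin (bigD1 e) //= [X in _ = X + _](bigD1 e) //= eqxx /h0 eqxx mulr0 add0r addrC.
  congr (_ + _); apply: eq_bigr => s /negbTE ->; by [].
have hdec : forall t, t = h e -> shift h = shift (fun s => h0 s + t * (s == e)%:R).
  move=> t ->; apply/funext => s; rewrite /shift /h0; case: eqP => [->|_].
    by rewrite mulr1 add0r.
  by rewrite mulr0 addr0.
rewrite lin'.
have [tlt|tgt|teq] := ltgtP (h e) 0.
- have := cup h0 (- h e) h0s'; rewrite oppr_gt0 => /(_ tlt).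
  rewrite opprK -(hdec _ erefl) ler_pdivrMr ?oppr_gt0 //; lra.
- have := clo h0 (h e) h0s' tgt; rewrite -(hdec _ erefl) ler_pdivlMr //; lra.
- rewrite teq mulr0 addr0 (hdec 0 (esym teq)).
  have -> : (fun s => h0 s + 0 * (s == e)%:R) = h0 by apply/funext=> s; rewrite mul0r addr0.
  exact: IH.
Qed.

Lemma subgrad : exists g : S -> R, forall W, f x + \sum_s g s * (W s - x s) <= f W.
Proof.
have [g Hg] := subgrad_seq (enum S).
exists g => W; have := Hg (fun s => W s - x s).
have -> : shift (fun s => W s - x s) = W by apply/funext => s; rewrite /shift addrC subrK.
by apply => s; rewrite mem_enum.
Qed.
End Subgrad.
Section Dual.
Variables (R : realType) (S : finType).

Lemma sum_delta (g : S -> R) s0 : \sum_s g s * (s == s0)%:R = g s0.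
Proof.
rewrite (bigD1 s0) //= eqxx mulr1 big1 ?addr0 // => s /negbTE ->; by rewrite mulr0.
Qed.

Lemma risk_dual (sig : (S -> R) -> R) (crm : convex_risk_measure sig) (V : S -> R) :
  exists mu, is_dist mu /\
    (penalty sig mu + (expect mu V)%:E <= (- sig V)%:E)%E.
Proof.
case: crm => mono cash conv.
have [g Hg] := @subgrad R S sig V conv.
pose mu := fun s => - g s.
exists mu; split; first split.
- move=> s; rewrite /mu oppr_ge0.
  have := Hg (fun s' => V s' + (s' == s)%:R).
  under eq_bigr do rewrite addrC addKr.
  rewrite sum_delta => H.
  have : sig (fun s' => V s' + (s' == s)%:R) <= sig V.
    by apply: mono => s'; rewrite lerDl ler0n.
  move: H; lra.
- have Hm : forall m, sig V + (\sum_s g s) * m <= sig V - m.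
    move=> m; have := Hg (fun s => V s + m); rewrite cash.
    by under eq_bigr do rewrite addrC addKr; rewrite -mulr_suml.
  have h1 := Hm 1; have h2 := Hm (-1).
  rewrite /mu sumrN; move: h1 h2; lra.
- have H1 : (penalty sig mu <= (- sig V - expect mu V)%:E)%E.
    apply: ge_ereal_sup => _ [W _ <-]; rewrite lee_fin.
    have := Hg W.
    have -> : \sum_s g s * (W s - V s) = expect mu V - expect mu W.
      rewrite /expect -sumrB; apply: eq_bigr => s _; rewrite /mu; ring.
    lra.
  have := leeD2r (expect mu V)%:E H1.
  by rewrite -EFinD subrK.
Qed.

Lemma sigma_diff (sig : (S -> R) -> R) (crm : convex_risk_measure sig)
  (P : S -> R) (V W : S -> R) :
  (forall mu, is_dist mu -> (penalty sig P + (expect P V)%:E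
        <= penalty sig mu + (expect mu V)%:E)%E) ->
  sig V - sig W <= expect P (fun s => W s - V s).
Proof.
move=> Pmin.
have [mu [mud Hmu]] := risk_dual sig crm V.
have H1 := le_trans (Pmin mu mud) Hmu.
have H2 : ((- sig W - expect P W)%:E <= penalty sig P)%E.
  by apply: ereal_sup_ubound; exists W.
have := le_trans (leeD2r (expect P V)%:E H2) H1.
rewrite -EFinD lee_fin.
have -> : expect P (fun s => W s - V s) = expect P W - expect P V.
  by rewrite /expect -sumrB; apply: eq_bigr => s _; ring.
lra.
Qed.
End Dual.
Section Dyn.
Variables (R : realType) (S A : finType) (gamma : R) (rho : S -> R)
  (pi : S -> A -> R) (K : S -> A -> S -> R) (Adv Delta : S -> R).
Hypotheses (g01 : 0 <= gamma < 1) (rhod : is_dist rho) (pid : is_policy pi)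
  (Kd : forall s a, is_dist (K s a)).
Hypothesis Hstep : forall s,
  Delta s <= Adv s + gamma * \sum_s' (\sum_a pi s a * K s a s') * Delta s'.

Notation sd := (state_dist rho pi K).

Lemma sd_ge0 t s : 0 <= sd t s.
Proof.
elim: t s => [|t IH] s /=; first by case: rhod.
apply: sumr_ge0 => s0 _; apply: mulr_ge0 => //.
apply: sumr_ge0 => a _; apply: mulr_ge0; [by case: (pid s0) | by case: (Kd s0 a)].
Qed.

Lemma sd_sum t : \sum_s sd t s = 1.
Proof.
elim: t => [|t IH] /=; first by case: rhod.
rewrite exchange_big /= -[RHS]IH; apply: eq_bigr => s _.
rewrite -mulr_sumr exchange_big /=.
have -> : \sum_a \sum_s' pi s a * K s a s' = 1.
  case: (pid s) => _ <-; apply: eq_bigr => a _.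
  by rewrite -mulr_sumr; case: (Kd s a) => _ ->; rewrite mulr1.
by rewrite mulr1.
Qed.

Lemma sd_le1 t s : sd t s <= 1.
Proof.
rewrite -(sd_sum t) (bigD1 s) //= lerDl; apply: sumr_ge0 => *; exact: sd_ge0.
Qed.

Definition psum (s : S) (n : nat) : R := \sum_(0 <= t < n) gamma ^+ t * sd t s.

Lemma iter_ineq n : \sum_s rho s * Delta s <=
  \sum_s psum s n * Adv s + gamma ^+ n * \sum_s sd n s * Delta s.
Proof.
have g0 : 0 <= gamma by case/andP: g01.
elim: n => [|n IH].
  rewrite expr0 mul1r [X in X + _]big1 ?add0r // => s _.
  by rewrite /psum big_geq // mul0r.
apply: (le_trans IH).
have E : forall s, psum s n.+1 * Adv s = psum s n * Adv s + gamma ^+ n * (sd n s * Adv s).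
  by move=> s; rewrite /psum big_nat_recr //= mulrDl mulrA.
under [X in _ <= X + _]eq_bigr do rewrite E.
rewrite big_split /= -mulr_sumr -addrA lerD2l exprSr -mulrA -mulrDr.
apply: ler_wpM2l; first exact: exprn_ge0.
have -> : \sum_s sd n.+1 s * Delta s =
   \sum_s sd n s * \sum_s' (\sum_a pi s a * K s a s') * Delta s'.
  rewrite /=. under eq_bigr do rewrite mulr_suml.
  rewrite exchange_big /=; apply: eq_bigr => s _; rewrite mulr_sumr.
  by apply: eq_bigr => s' _; rewrite mulrA.
rewrite mulr_sumr -big_split /=; apply: ler_sum => s _.
rewrite mulrCA -mulrDr; apply: ler_wpM2l; [exact: sd_ge0 | exact: Hstep].
Qed.

Lemma geom_sum n : \sum_(0 <= t < n) gamma ^+ t * (1 - gamma) = 1 - gamma ^+ n.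
Proof.
elim: n => [|n IH]; first by rewrite big_geq // expr0 subrr.
by rewrite big_nat_recr //= IH exprS; ring.
Qed.

Lemma psum_cvg s : cvgn (psum s).
Proof.
have [g0 g1] := andP g01.
apply: nondecreasing_is_cvgn.
  apply/nondecreasing_seqP => n; rewrite /psum big_nat_recr //= lerDl.
  by apply: mulr_ge0; [exact: exprn_ge0 | exact: sd_ge0].
exists (1 - gamma)^-1 => _ [n _ <-].
have g1p : 0 < 1 - gamma by rewrite subr_gt0.
rewrite -(mul1r (1 - gamma)^-1) ler_pdivlMr //.
apply: (@le_trans _ _ (\sum_(0 <= t < n) gamma ^+ t * (1 - gamma))).
  rewrite /psum mulr_suml; apply: ler_sum => t _; apply: ler_wpM2r; first exact: ltW.
  by rewrite ler_piMr ?exprn_ge0 // sd_le1.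
by rewrite geom_sum gerDl oppr_le0 exprn_ge0.
Qed.

Lemma psum_lim_ge0 s : 0 <= limn (psum s).
Proof.
have [g0 _] := andP g01.
apply: limr_ge; first exact: psum_cvg.
near=> n; apply: sumr_ge0 => t _; apply: mulr_ge0; [exact: exprn_ge0 | exact: sd_ge0].
Unshelve. all: by end_near.
Qed.

Lemma perf_diff : \sum_s rho s * Delta s <= \sum_s limn (psum s) * Adv s.
Proof.
have [g0 g1] := andP g01.
pose C := \sum_s `|Delta s|.
pose u := fun n => \sum_s psum s n * Adv s + gamma ^+ n * C.
have ub : forall n, \sum_s rho s * Delta s <= u n.
  move=> n; apply: (le_trans (iter_ineq n)); rewrite lerD2l.
  apply: ler_wpM2l; first exact: exprn_ge0.
  apply: ler_sum => s _; apply: (le_trans (ler_norm _)).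
  rewrite normrM ger0_norm ?sd_ge0 //; apply: ler_piMl; [exact: normr_ge0 | exact: sd_le1].
have cu : u @ \oo --> \sum_s limn (psum s) * Adv s + 0 * C.
  apply: cvgD.
    have cs : forall (r : seq S), (fun n => \sum_(s <- r) psum s n * Adv s) @ \oo -->
        \sum_(s <- r) limn (psum s) * Adv s.
      elim => [|s0 r IHr].
        under eq_cvg do rewrite big_nil. rewrite big_nil; exact: cvg_cst.
      under eq_cvg do rewrite big_cons. rewrite big_cons.
      apply: (cvgD _ IHr); apply: cvgMr_tmp; exact: psum_cvg.
    exact: cs.
  apply: cvgMr_tmp; apply: cvg_expr; rewrite ger0_norm //.
rewrite mul0r addr0 in cu.
have H : \sum_s rho s * Delta s <= limn u.
  apply: limr_ge; first by apply/cvg_ex; eexists; exact: cu.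
  by apply: nearW => m; exact: ub.
by move: H; rewrite (cvg_lim _ cu).
Unshelve. all: by end_near.
Qed.
End Dyn.
Lemma le_bigmax_seq (R : realType) (T : eqType) (r : seq T) (F : T -> R) x :
  x \in r -> F x <= \big[Num.max/0]_(i <- r) F i.
Proof.
elim: r => [|y r IH] //; rewrite inE big_cons => /orP [/eqP ->|xr].
  by rewrite le_max lexx.
by rewrite le_max (IH xr) orbT.
Qed.

Lemma bigmax_ge0 (R : realType) (T : eqType) (r : seq T) (F : T -> R) :
  0 <= \big[Num.max/0]_(i <- r) F i.
Proof.
elim: r => [|y r IH]; first by rewrite big_nil.
by rewrite big_cons le_max IH orbT.
Qed.

Lemma det_sum (R : realType) (S A : finType) (f : S -> A) s (X : A -> R) :
  \sum_a @det_policy R S A f s a * X a = X (f s).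
Proof.
rewrite (bigD1 (f s)) //= /det_policy eqxx mul1r big1 ?addr0 // => a /negbTE ->.
by rewrite mul0r.
Qed.

Lemma det_is_policy (R : realType) (S A : finType) (f : S -> A) :
  is_policy (@det_policy R S A f).
Proof.
move=> s; split; first by move=> a; rewrite /det_policy; case: eqP.
have := @det_sum R S A f s (fun _ => 1 : R); under eq_bigr do rewrite mulr1; by [].
Qed.

Lemma avg_le (R : realType) (A : finType) (p F : A -> R) m :
  is_dist p -> (forall a, F a <= m) -> \sum_a p a * F a <= m.
Proof.
move=> [p0 p1] Fm; apply: (@le_trans _ _ (\sum_a p a * m)).
  by apply: ler_sum => a _; apply: ler_wpM2l.
by rewrite -mulr_suml p1 mul1r.
Qed.

Theorem mainTheorem8 (R : realType) (S A : finType)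
  (sigma : S -> A -> (S -> R) -> R) (r : S -> A -> R) (gamma : R) (rho : S -> R)
  (theta : S -> A -> R) (Vtheta Vstar : S -> R) (Phat : S -> A -> S -> R)
  (pistar : S -> A) :
  (forall s a, convex_risk_measure (sigma s a)) ->
  (forall s a, 0 <= r s a <= 1) ->
  0 <= gamma < 1 ->
  is_dist rho ->
  is_policy theta ->
  is_robust_value sigma r gamma theta Vtheta ->
  is_robust_optimal_value sigma r gamma Vstar ->
  is_worst_kernel sigma Vtheta Phat ->
  (forall s a, r s a - gamma * sigma s a Vstar
               <= r s (pistar s) - gamma * sigma s (pistar s) Vstar) ->
  (forall s, 0 < occupancy gamma rho theta Phat s) ->
  let G := fun s a => (1 - gamma)^-1 * occupancy gamma rho theta Phat s *
                      (r s a - gamma * sigma s a Vtheta) in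
  \sum_(s : S) rho s * (Vstar s - Vtheta s)
  <= (\big[Num.max/0]_(s : S)
        (occupancy gamma rho (@det_policy R S A pistar) Phat s
         / occupancy gamma rho theta Phat s))
     * sup [set inner (fun s a => pib s a - theta s a) G | pib in @is_policy R S A].
Proof.
move=> Hcrm Hr g01 Hrho Htheta HVt HVs Hwk Hpis Hocc.
cbv zeta; set G := (fun s a => (1 - gamma)^-1 * _ * _).
have [g0 g1] := andP g01.
have g1p : 0 < 1 - gamma by rewrite subr_gt0.
pose d1 := @det_policy R S A pistar.
pose Q := fun s a => r s a - gamma * sigma s a Vtheta.
pose Adv := fun s => Q s (pistar s) - Vtheta s.
pose Delta := fun s => Vstar s - Vtheta s.
pose dt := occupancy gamma rho theta Phat.
pose gr := fun s => Order.arg_max (pistar s) xpredT (Q s).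
have grP : forall s b, Q s b <= Q s (gr s).
  move=> s b; rewrite /gr; case: (@arg_maxP _ R A (pistar s) xpredT (Q s) isT) => a _ H.
  exact: (H b isT).
pose Bmax := fun s => Q s (gr s) - Vtheta s.
have Vt_le : forall s, Vtheta s <= Q s (gr s).
  by move=> s; rewrite HVt; apply: avg_le => //; exact: grP.
have Bmax0 : forall s, 0 <= Bmax s by move=> s; rewrite /Bmax subr_ge0.
have Kd : forall s a, is_dist (Phat s a) by move=> s a; case: (Hwk s a).
have Hstep : forall s, Delta s <=
    Adv s + gamma * \sum_s' (\sum_a d1 s a * Phat s a s') * Delta s'.
  move=> s.
  under eq_bigr do rewrite det_sum.
  have [a amax Va] := HVs s.
  have h1 : Vstar s <= r s (pistar s) - gamma * sigma s (pistar s) Vstar.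
    by rewrite Va; exact: Hpis.
  have h2 := @sigma_diff R S _ (Hcrm s (pistar s)) _ Vtheta Vstar (Hwk s (pistar s)).2.
  have h3 := ler_wpM2l g0 h2.
  rewrite mulrBr in h3.
  have -> : \sum_s' Phat s (pistar s) s' * Delta s' =
     expect (Phat s (pistar s)) (fun s0 => Vstar s0 - Vtheta s0) by [].
  rewrite /Delta /Adv /Q; lra.
have perf := @perf_diff R S A gamma rho d1 Phat Adv Delta g01 Hrho
   (@det_is_policy R S A pistar) Kd Hstep.
pose lp := fun s => limn (psum R S A gamma rho d1 Phat s).
have lp0 : forall s, 0 <= lp s.
  move=> s; exact: (@psum_lim_ge0 R S A gamma rho d1 Phat g01 Hrho (@det_is_policy R S A pistar) Kd).
set M := \big[Num.max/0]_(s : S) _.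
have M0 : 0 <= M by apply: bigmax_ge0.
have Mge : forall s, occupancy gamma rho d1 Phat s / dt s <= M.
  move=> s; exact: (@le_bigmax_seq R S (index_enum S) (fun s => occupancy gamma rho d1 Phat s / dt s) s (mem_index_enum s)).
have innerE : forall pib, inner (fun s a => pib s a - theta s a) G =
    \sum_s (1 - gamma)^-1 * dt s * (\sum_a pib s a * Q s a - Vtheta s).
  move=> pib; apply: eq_bigr => s _; rewrite HVt -sumrB mulr_sumr.
  by apply: eq_bigr => a _; rewrite /G /Q /dt; ring.
pose E := [set inner (fun s a => pib s a - theta s a) G | pib in @is_policy R S A].
have Egr : E (\sum_s (1 - gamma)^-1 * dt s * Bmax s).
  exists (@det_policy R S A gr); first exact: (@det_is_policy R S A gr).
  rewrite innerE; apply: eq_bigr => s _; by rewrite det_sum.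
have hsE : has_sup E.
  split; first by eexists; exact: Egr.
  exists (\sum_s (1 - gamma)^-1 * dt s * Bmax s) => _ [pib pibp <-].
  rewrite innerE; apply: ler_sum => s _; apply: ler_wpM2l.
    by apply: mulr_ge0; [rewrite invr_ge0 ltW | exact: ltW].
  by rewrite lerD2r; apply: avg_le => //; exact: grP.
apply: (le_trans perf).
apply: (@le_trans _ _ (\sum_s lp s * Bmax s)).
  apply: ler_sum => s _; apply: ler_wpM2l; first exact: lp0.
  by rewrite /Adv /Bmax /= lerD2r; exact: grP.
apply: (@le_trans _ _ (M * \sum_s (1 - gamma)^-1 * dt s * Bmax s)); last first.
  by apply: ler_wpM2l => //; apply: (sup_upper_bound hsE).
rewrite mulr_sumr; apply: ler_sum => s _.
have dtp := Hocc s.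
have -> : lp s * Bmax s =
   (occupancy gamma rho d1 Phat s / dt s) * ((1 - gamma)^-1 * dt s * Bmax s).
  rewrite /occupancy /lp /dt; field.
  by rewrite (gt_eqF dtp) (gt_eqF g1p).
apply: ler_wpM2r; last exact: Mge.
apply: mulr_ge0 => //; apply: mulr_ge0; [rewrite invr_ge0 ltW // | exact: ltW].
Qed.
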